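(* Let $d\ge3$ be an integer, $p_1,\dots,p_d\in(0,1)$, $q_j=1-p_j$, $P=\prod_{j=1}^dp_jq_j^{-1}$, and $\lambda\in(0,1)$. For every integer $n\ge L(P^{1/d},\lambda)$, $$\sum_{k=0}^n\binom nk^dP^k\ge\left(\frac{\sqrt{2\pi}}{e^2}\right)^dK(P^{1/d},d,\lambda)\,n^{-\frac{d-1}{2}}\left(1+P^{1/d}\right)^{dn}.$$
   Context: For $\alpha>0$, $\lambda\in(0,1)$, with $[x]$ the greatest integer $\le x$: $L(\alpha,\lambda)=\max\left\{\left[\left(\frac{(\alpha+1)+\sqrt{(\alpha+1)^2+4\lambda\alpha}}{2\lambda\alpha}\right)^2\right]+1,\ \left[\left(\frac{(\alpha+1)+\sqrt{(\alpha+1)^2+4\lambda\alpha}}{2\lambda}\right)^2\right]+1\right\}$; $C_1(\alpha,\lambda)=\max\left\{4,\frac{(\alpha+1)^2}{\alpha(1+\lambda\alpha)}\right\}\exp\!\left(-\frac12\frac{1+\lambda\alpha}{(1-\lambda)\alpha}\left((\alpha+1)^2+\frac{\lambda\alpha}{1+\lambda\alpha}\right)\right)$; $C_2(\alpha,\lambda)=\max\left\{4,\frac{(\alpha+1)^2}{\alpha+\lambda}\right\}\exp\!\left(-\frac12\frac{\alpha+\lambda}{(1-\lambda)\alpha^2}\left((\alpha+1)^2+\frac{\lambda\alpha^2}{\alpha+\lambda}\right)\right)$; $K(\alpha,d,\lambda)=\frac{(1-\lambda)\alpha+1}{\alpha+1}\left(C_1(\alpha,\lambda)\right)^d+\left(C_2(\alpha,\lambda)\right)^d$.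 *)

(* Defs.v *)
From Stdlib Require Import Reals Lra Lia ZArith.
Open Scope R_scope.

(* floor [x] = greatest integer <= x ; Int_part x = up x - 1 is exactly that *)
Definition floorR (x : R) : Z := Int_part x.

Definition Lroot (a l : R) : R := (a + 1) + sqrt ((a + 1)^2 + 4 * l * a).

Definition Lfun (a l : R) : Z :=
  Z.max (floorR ((Lroot a l / (2 * l * a))^2) + 1)
        (floorR ((Lroot a l / (2 * l))^2) + 1).

Definition C1 (a l : R) : R :=
  Rmax 4 ((a + 1)^2 / (a * (1 + l * a))) *
  exp (- (1/2) * ((1 + l * a) / ((1 - l) * a)) *
       ((a + 1)^2 + (l * a) / (1 + l * a))).

Definition C2 (a l : R) : R :=
  Rmax 4 ((a + 1)^2 / (a + l)) *
  exp (- (1/2) * ((a + l) / ((1 - l) * a^2)) *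
       ((a + 1)^2 + (l * a^2) / (a + l))).

Definition Kfun (a : R) (d : nat) (l : R) : R :=
  ((1 - l) * a + 1) / (a + 1) * (C1 a l)^d + (C2 a l)^d.

(* P = prod_{j=1}^d p_j / q_j, with p : nat -> R indexed 0..d-1 *)
Fixpoint prodR (f : nat -> R) (d : nat) : R :=
  match d with O => 1 | S k => prodR f k * f k end.

(* Main.v *)
Require Import Defs.
From Stdlib Require Import Reals ZArith.
From Stdlib Require Import Lra Lia Psatz.
Open Scope R_scope.

Lemma exp_le_mono x y : x <= y -> exp x <= exp y.
Proof. intros [H|H]. left; now apply exp_increasing. subst; lra. Qed.

Lemma div_le p q r s : 0 < q -> 0 < s -> p * s <= r * q -> p / q <= r / s.
Proof.
  intros Hq Hs H. apply Rmult_le_reg_r with (q * s). nra.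
  replace (p / q * (q * s)) with (p * s) by (field; lra).
  replace (r / s * (q * s)) with (r * q) by (field; lra). lra.
Qed.

Lemma Cb a M u v : 0 < a -> M <= (a+1)^2/a -> 1/a <= u -> (a+1)^2 <= v ->
  Rmax 4 M * exp (- (1/2) * u * v) <= 4 * exp (-2).
Proof.
  intros Ha HM Hu Hv.
  assert (HQ4 : 4 <= (a+1)^2/a).
  { replace 4 with (4/1) by field. apply div_le. lra. lra. assert (0 <= (a-1)^2) by apply pow2_ge_0. lra. }
  assert (HQ : (a+1)^2/a <= u * v).
  { replace ((a+1)^2/a) with ((1/a) * (a+1)^2) by (field; lra).
    assert (0 < 1/a) by (apply Rdiv_lt_0_compat; lra).
    apply Rmult_le_compat; try lra. nra. }
  set (w := Rmax 4 M).
  assert (Hw4 : 4 <= w) by apply Rmax_l.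
  assert (HwX : w <= u * v) by (apply Rmax_lub; lra).
  replace (- (1/2) * u * v) with (- (1/2) * (u * v)) by ring.
  assert (E1 : exp (- (1/2) * (u*v)) <= exp (-(1/2) * w)) by (apply exp_le_mono; lra).
  assert (E2 : exp (-2) = exp (-(1/2) * w) * exp ((w - 4)/2)) by (rewrite <- exp_plus; f_equal; field).
  pose proof (exp_ineq1_le ((w-4)/2)).
  pose proof (exp_pos (-(1/2) * w)). pose proof (exp_pos (- (1/2) * (u * v))).
  rewrite E2. nra.
Qed.

Lemma tangent e x t : 0 <= x -> 0 <= t ->
  INR (S e) * t^e * x - INR e * t^(S e) <= x^(S e).
Proof.
  intros Hx Ht. induction e as [|e IH].
  - simpl. lra.
  - assert (H2 := Rmult_le_compat_l x _ _ Hx IH).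
    assert (HT : 0 <= t^e) by (apply pow_le; lra).
    assert (HE : 0 <= INR e) by apply pos_INR.
    assert (H3 : 0 <= (INR e + 1) * t^e * ((x - t) * (x - t))).
    { apply Rmult_le_pos; [apply Rmult_le_pos; lra|apply Rle_0_sqr]. }
    rewrite !S_INR in *. simpl in *. nra.
Qed.

Lemma sum_lin2 (f g : nat -> R) al be N :
  sum_f_R0 (fun k => al * f k + be * g k) N = al * sum_f_R0 f N + be * sum_f_R0 g N.
Proof. induction N; simpl; [ring| rewrite IHN; ring]. Qed.

Lemma sum_lin3 (f g h : nat -> R) al be ga N :
  sum_f_R0 (fun k => al * f k + be * g k + ga * h k) N =
  al * sum_f_R0 f N + be * sum_f_R0 g N + ga * sum_f_R0 h N.
Proof. induction N; simpl; [ring| rewrite IHN; ring]. Qed.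

Lemma sum_scal (f : nat -> R) c N :
  sum_f_R0 (fun k => c * f k) N = c * sum_f_R0 f N.
Proof. induction N; simpl; [ring| rewrite IHN; ring]. Qed.

Lemma absorb N j : (j <= N)%nat -> INR (S j) * C (S N) (S j) = INR (S N) * C N j.
Proof.
  intros Hj. unfold C. replace (S N - S j)%nat with (N - j)%nat by lia.
  rewrite !fact_simpl, !mult_INR.
  pose proof (INR_fact_neq_0 N). pose proof (INR_fact_neq_0 j).
  pose proof (INR_fact_neq_0 (N - j)).
  assert (INR (S j) <> 0) by (rewrite S_INR; pose proof (pos_INR j); lra).
  field. repeat split; auto.
Qed.

Lemma binom_a a n : sum_f_R0 (fun i => C n i * a^i) n = (1 + a)^n.
Proof.
  rewrite Rplus_comm, binomial. apply sum_eq. intros i _. rewrite pow1. ring.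
Qed.

Lemma I1 a n : (1 + a) * sum_f_R0 (fun k => INR k * (C n k * a^k)) n = INR n * a * (1+a)^n.
Proof.
  destruct n as [|N].
  - simpl. ring.
  - rewrite decomp_sum by lia. simpl Init.Nat.pred.
    rewrite (sum_eq _ (fun i => (INR (S N) * a) * (C N i * a^i))).
    2:{ intros i Hi. rewrite <- Rmult_assoc, absorb by lia. simpl pow. ring. }
    rewrite sum_scal, binom_a. simpl INR at 1. simpl pow. ring.
Qed.

Lemma I2 a n : (1 + a)^2 * sum_f_R0 (fun k => INR k * (INR k - 1) * (C n k * a^k)) n
  = INR n * (INR n - 1) * a^2 * (1+a)^n.
Proof.
  destruct n as [|N].
  - simpl. ring.
  - rewrite decomp_sum by lia. simpl Init.Nat.pred.
    rewrite (sum_eq _ (fun i => (INR (S N) * a) * (INR i * (C N i * a^i)))).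
    2:{ intros i Hi. replace (INR (S i) - 1) with (INR i) by (rewrite S_INR; ring).
        replace (INR (S i) * INR i * (C (S N) (S i) * a ^ S i)) with
          ((INR (S i) * C (S N) (S i)) * INR i * a * a^i) by (simpl pow; ring).
        rewrite absorb by lia. ring. }
    rewrite sum_scal.
    replace ((1 + a) ^ 2 * (INR 0 * (INR 0 - 1) * (C (S N) 0 * a ^ 0) +
       INR (S N) * a * sum_f_R0 (fun i : nat => INR i * (C N i * a ^ i)) N))
    with (INR (S N) * a * (1 + a) * ((1 + a) * sum_f_R0 (fun i : nat => INR i * (C N i * a ^ i)) N)) by (simpl; ring).
    rewrite I1. rewrite S_INR. simpl pow. ring.
Qed.

Lemma count (h : nat -> R) A B : A <= B -> (forall k, 0 <= h k <= 1) ->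
  (forall k, h k <> 0 -> A < INR k < B) -> forall n,
  sum_f_R0 h n <= Rmax 0 (INR n + 1 - A) /\ sum_f_R0 h n <= B - A + 1.
Proof.
  intros HAB H01 Hin n. induction n as [|n [IH1 IH2]].
  - simpl. destruct (Req_dec (h 0%nat) 0) as [E|E].
    + rewrite E. split; [apply Rmax_l| lra].
    + pose proof (Hin _ E) as HH. simpl in HH. pose proof (H01 0%nat).
      split; [eapply Rle_trans; [|apply Rmax_r]; lra | lra].
  - simpl sum_f_R0. rewrite S_INR.
    destruct (Req_dec (h (S n)) 0) as [E|E].
    + rewrite E. split; [|lra].
      apply Rle_trans with (Rmax 0 (INR n + 1 - A)). lra.
      apply Rmax_lub; [apply Rmax_l| eapply Rle_trans; [|apply Rmax_r]; lra].
    + pose proof (Hin _ E) as HH. rewrite S_INR in HH. pose proof (H01 (S n)).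
      assert (Rmax 0 (INR n + 1 - A) = INR n + 1 - A) by (apply Rmax_right; lra).
      split; [eapply Rle_trans; [|apply Rmax_r]; lra | lra].
Qed.

Lemma prod_pos (f : nat -> R) d : (forall j, (j < d)%nat -> 0 < f j) -> 0 < prodR f d.
Proof.
  induction d as [|d IH]; intros H; simpl. lra.
  apply Rmult_lt_0_compat. apply IH; intros; apply H; lia. apply H; lia.
Qed.

Lemma floor_nonneg x : 0 <= x -> (0 <= floorR x)%Z.
Proof.
  intros Hx. unfold floorR, Int_part. destruct (archimed x) as [H1 H2].
  assert (0 < up x)%Z by (apply lt_0_IZR; lra). lia.
Qed.

Lemma sq_exp x b b' : 0 <= b -> b' <= b * b -> b <= exp (x/2) -> b' <= exp x.
Proof.
  intros H0 H1 H2. replace x with (x/2 + x/2) by field. rewrite exp_plus.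
  assert (b * b <= exp (x/2) * exp (x/2)) by (apply Rmult_le_compat; lra). lra.
Qed.

Lemma exp2_ge : 7 <= exp 2.
Proof.
  assert (e32: 103125/100000 <= exp (1/32)) by (pose proof (exp_ineq1_le (1/32)); lra).
  assert (e16: 10634/10000 <= exp (1/16)).
  { apply (sq_exp _ (103125/100000)); [lra|lra|]. replace (1/16/2) with (1/32) by field; exact e32. }
  assert (e8: 11308/10000 <= exp (1/8)).
  { apply (sq_exp _ (10634/10000)); [lra|lra|]. replace (1/8/2) with (1/16) by field; exact e16. }
  assert (e4: 12787/10000 <= exp (1/4)).
  { apply (sq_exp _ (11308/10000)); [lra|lra|]. replace (1/4/2) with (1/8) by field; exact e8. }
  assert (e2: 1635/1000 <= exp (1/2)).
  { apply (sq_exp _ (12787/10000)); [lra|lra|]. replace (1/2/2) with (1/4) by field; exact e4. }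
  assert (e1: 2673/1000 <= exp 1).
  { apply (sq_exp _ (1635/1000)); [lra|lra|]. replace (1/2) with (1/2) by field; exact e2. }
  apply (sq_exp _ (2673/1000)); [lra|lra|]. replace (2/2) with 1 by field; exact e1.
Qed.

Lemma qc_bound : 0 <= sqrt (2 * PI) / exp 2 * (4 * exp (-2)) <= / 4.
Proof.
  pose proof exp2_ge. pose proof PI_4. pose proof PI_RGT_0.
  assert (Hs : sqrt (2 * PI) <= 283/100).
  { rewrite <- (sqrt_square (283/100)) by lra. apply sqrt_le_1_alt. lra. }
  assert (Hs0 : 0 <= sqrt (2 * PI)) by apply sqrt_pos.
  replace (exp (-2)) with (/ exp 2) by (rewrite <- exp_Ropp; f_equal; ring).
  replace (sqrt (2 * PI) / exp 2 * (4 * / exp 2)) with ((4 * sqrt (2 * PI)) / (exp 2 * exp 2))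
    by (field; pose proof (exp_pos 2); lra).
  split.
  - apply Rmult_le_pos. lra. left; apply Rinv_0_lt_compat; nra.
  - replace (/4) with (1/4) by field. apply div_le; nra.
Qed.

Lemma Rdiv_le_0_compat x y : 0 <= x -> 0 < y -> 0 <= x / y.
Proof. intros. unfold Rdiv. apply Rmult_le_pos; auto. left; apply Rinv_0_lt_compat; auto. Qed.

Theorem proposition15 (d : nat) (p : nat -> R) (l : R) :
  (3 <= d)%nat ->
  (forall j, (j < d)%nat -> 0 < p j < 1) ->
  0 < l < 1 ->
  let P := prodR (fun j => p j / (1 - p j)) d in
  let a := Rpower P (1 / INR d) in
  forall n : nat, (Lfun a l <= Z.of_nat n)%Z ->
  sum_f_R0 (fun k => (C n k)^d * P^k) n >=
    (sqrt (2 * PI) / exp 2)^d * Kfun a d l *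
    Rpower (INR n) (- (INR d - 1) / 2) * (1 + a)^(d * n).
Proof.
  intros Hd Hp Hl P a n Hn.
  assert (HP : 0 < P).
  { unfold P. apply prod_pos. intros j Hj. destruct (Hp j Hj).
    apply Rdiv_lt_0_compat; lra. }
  assert (Ha : 0 < a) by (unfold a, Rpower; apply exp_pos).
  assert (HdR : 0 < INR d) by (apply lt_0_INR; lia).
  assert (HaP : a ^ d = P).
  { rewrite <- Rpower_pow by auto. unfold a. rewrite Rpower_mult.
    replace (1 / INR d * INR d) with 1 by (field; lra). apply Rpower_1; auto. }
  assert (Hn1 : (1 <= n)%nat).
  { unfold Lfun in Hn.
    pose proof (floor_nonneg ((Lroot a l / (2 * l * a)) ^ 2) (pow2_ge_0 _)).
    pose proof (Z.le_max_l (floorR ((Lroot a l / (2 * l * a)) ^ 2) + 1)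
                          (floorR ((Lroot a l / (2 * l)) ^ 2) + 1)). lia. }
  clearbody P a.
  destruct d as [|e]; [lia|].
  set (S0 := (1 + a)^n).
  assert (HS : 0 < S0) by (apply pow_lt; lra).
  set (x := fun k => C n k * a^k).
  assert (HC : forall k, (k <= n)%nat -> 0 <= C n k).
  { intros k Hk. unfold C. left. apply Rdiv_lt_0_compat. apply lt_0_INR, lt_O_fact.
    apply Rmult_lt_0_compat; apply lt_0_INR, lt_O_fact. }
  assert (Hx : forall k, (k <= n)%nat -> 0 <= x k).
  { intros k Hk. unfold x. apply Rmult_le_pos; auto. apply pow_le; lra. }
  rewrite (sum_eq _ (fun k => (x k)^(S e))).
  2:{ intros i Hi. unfold x. rewrite <- HaP, <- pow_mult, Nat.mul_comm, pow_mult,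
        Rpow_mult_distr. reflexivity. }
  assert (HnR : 1 <= INR n) by (apply (le_INR 1); lia).
  set (sn := sqrt (INR n)).
  assert (Hsn1 : 1 <= sn) by (unfold sn; rewrite <- sqrt_1; apply sqrt_le_1_alt; lra).
  assert (Hsn2 : sn * sn = INR n) by (unfold sn; apply sqrt_sqrt; lra).
  set (m := INR n * a / (1 + a)).
  set (h := fun k => if Rlt_dec ((INR k - m)^2) (INR n) then 1 else 0).
  assert (Hcount : sum_f_R0 h n <= 3 * sn).
  { destruct (count h (m - sn) (m + sn)) with (n := n) as [_ H2].
    - lra.
    - intros k. unfold h. destruct Rlt_dec; lra.
    - intros k. unfold h. destruct Rlt_dec as [Hlt|]; [|lra]. intros _. split; nra.
    - lra. }
  assert (Hmass : 3 * S0 / 4 <= sum_f_R0 (fun k => h k * x k) n).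
  { apply Rle_trans with (sum_f_R0 (fun k => (1 - (INR k - m)^2 / INR n) * x k) n).
    2:{ apply sum_Rle. intros k Hk. apply Rmult_le_compat_r; auto.
        unfold h. destruct Rlt_dec as [Hlt|Hge].
        - assert (0 <= (INR k - m)^2 / INR n) by (apply Rdiv_le_0_compat; [apply pow2_ge_0|lra]). lra.
        - assert (1 <= (INR k - m)^2 / INR n).
          { replace 1 with (INR n / INR n) by (field; lra). apply div_le; nra. }
          lra. }
    rewrite (sum_eq _ (fun k => (1 - m^2 / INR n) * x k
         + (- / INR n) * (INR k * (INR k - 1) * (C n k * a^k))
         + (- (1 - 2 * m) / INR n) * (INR k * (C n k * a^k)))).
    2:{ intros i _. unfold x. field. lra. }
    rewrite sum_lin3.
    assert (E0 : sum_f_R0 x n = S0) by apply binom_a.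
    assert (E1 : sum_f_R0 (fun k => INR k * (C n k * a ^ k)) n = INR n * a * S0 / (1 + a)).
    { apply Rmult_eq_reg_l with (1 + a); [|lra]. rewrite I1. fold S0. field. lra. }
    assert (E2 : sum_f_R0 (fun k => INR k * (INR k - 1) * (C n k * a ^ k)) n
                 = INR n * (INR n - 1) * a^2 * S0 / (1 + a)^2).
    { apply Rmult_eq_reg_l with ((1 + a)^2); [|apply pow_nonzero; lra]. rewrite I2. fold S0. field. lra. }
    rewrite E0, E1, E2.
    replace ((1 - m ^ 2 / INR n) * S0 + - / INR n * (INR n * (INR n - 1) * a ^ 2 * S0 / (1 + a) ^ 2) +
      - (1 - 2 * m) / INR n * (INR n * a * S0 / (1 + a))) with (S0 - a / (1 + a)^2 * S0)
      by (unfold m; field; lra).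
    assert (a / (1 + a)^2 <= 1 / 4) by (apply div_le; [apply pow_lt; lra| lra| pose proof (pow2_ge_0 (a-1)); lra]).
    nra. }
  set (t := S0 / (4 * sn)).
  assert (Ht : 0 <= t) by (unfold t; apply Rdiv_le_0_compat; lra).
  assert (HLB : t^e * (3 * S0 / 4) <= sum_f_R0 (fun k => x k ^ S e) n).
  { apply Rle_trans with (sum_f_R0 (fun k => h k * (INR (S e) * t^e * x k - INR e * t^(S e))) n).
    2:{ apply sum_Rle. intros k Hk. unfold h. destruct Rlt_dec.
        - rewrite Rmult_1_l. apply tangent; auto.
        - rewrite Rmult_0_l. apply pow_le; auto. }
    rewrite (sum_eq _ (fun k => (INR (S e) * t^e) * (h k * x k) + (- (INR e * t^(S e))) * h k)).
    2:{ intros i _. ring. }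
    rewrite sum_lin2.
    assert (0 <= t^e) by (apply pow_le; auto).
    assert (0 <= INR e) by apply pos_INR.
    assert (Hts : t * sn = S0 / 4) by (unfold t; field; lra).
    assert (A1 : INR (S e) * t^e * (3 * S0 / 4) <= INR (S e) * t^e * sum_f_R0 (fun k => h k * x k) n).
    { apply Rmult_le_compat_l; auto. apply Rmult_le_pos; auto. apply pos_INR. }
    assert (A2 : INR e * t^(S e) * sum_f_R0 h n <= INR e * t^(S e) * (3 * sn)).
    { apply Rmult_le_compat_l; auto. apply Rmult_le_pos; auto. apply pow_le; auto. }
    replace (t ^ S e) with (t * t^e) in * by reflexivity.
    rewrite S_INR in *.
    replace (INR e * (t * t ^ e) * (3 * sn)) with (INR e * t^e * 3 * (t * sn)) in A2 by ring.
    rewrite Hts in A2. nra. }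
  assert (HK : (sqrt (2 * PI) / exp 2) ^ S e * Kfun a (S e) l <= 2 * (/4) ^ S e).
  { set (q := sqrt (2 * PI) / exp 2). set (c := 4 * exp (-2)).
    assert (Hq : 0 < q).
    { unfold q. apply Rdiv_lt_0_compat; [apply sqrt_lt_R0; pose proof PI_RGT_0; lra|apply exp_pos]. }
    assert (HC1 : 0 <= Defs.C1 a l <= c).
    { split. unfold Defs.C1. apply Rmult_le_pos; [pose proof (Rmax_l 4 ((a + 1) ^ 2 / (a * (1 + l * a)))); lra|left; apply exp_pos].
      unfold Defs.C1, c. apply (Cb a); auto.
      - apply div_le; [nra|lra|]. assert (0 <= (a+1)^2) by apply pow2_ge_0.
        apply Rmult_le_compat_l; [lra|nra].
      - apply div_le; [lra|nra|nra].
      - assert (0 <= l * a / (1 + l * a)) by (apply Rdiv_le_0_compat; nra). lra. }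
    assert (HC2 : 0 <= Defs.C2 a l <= c).
    { split. unfold Defs.C2. apply Rmult_le_pos; [pose proof (Rmax_l 4 ((a + 1) ^ 2 / (a + l))); lra|left; apply exp_pos].
      unfold Defs.C2, c. apply (Cb a); auto.
      - apply div_le; [lra|lra|]. assert (0 <= (a+1)^2) by apply pow2_ge_0.
        apply Rmult_le_compat_l; [lra|lra].
      - apply div_le; [lra|apply Rmult_lt_0_compat; [lra|apply pow_lt; lra]|]. replace (a^2) with (a*a) by ring. nra.
      - assert (0 <= l * a^2 / (a + l)) by (apply Rdiv_le_0_compat; nra). lra. }
    assert (Hk : 0 <= ((1 - l) * a + 1) / (a + 1) <= 1).
    { split. apply Rdiv_le_0_compat; nra.
      apply Rle_trans with ((a+1)/(a+1)). apply div_le; try lra. apply Rmult_le_compat_r; nra. right; field; lra. }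
    assert (P1 : Defs.C1 a l ^ S e <= c ^ S e) by (apply pow_incr; lra).
    assert (P2 : Defs.C2 a l ^ S e <= c ^ S e) by (apply pow_incr; lra).
    assert (P0 : 0 <= Defs.C1 a l ^ S e) by (apply pow_le; lra).
    assert (HKb : Kfun a (S e) l <= 2 * c ^ S e).
    { unfold Kfun. nra. }
    assert (Hqc : (q * c) ^ S e <= (/4) ^ S e).
    { apply pow_incr. exact qc_bound. }
    rewrite Rpow_mult_distr in Hqc.
    assert (0 <= q ^ S e) by (apply pow_le; lra).
    nra. }
  assert (ER : Rpower (INR n) (- (INR (S e) - 1) / 2) = / sn ^ e).
  { replace (- (INR (S e) - 1) / 2) with (- (/ 2 * INR e)) by (rewrite S_INR; field).
    rewrite Rpower_Ropp, <- Rpower_mult, Rpower_sqrt by lra. fold sn.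
    rewrite Rpower_pow by lra. reflexivity. }
  rewrite ER. rewrite Nat.mul_comm, pow_mult. fold S0.
  assert (Et : t ^ e = S0 ^ e * (/ 4) ^ e * / sn ^ e).
  { unfold t. unfold Rdiv. rewrite Rinv_mult, !Rpow_mult_distr, !pow_inv. ring. }
  rewrite Et in HLB.
  assert (HZ : 0 <= / sn ^ e * S0 ^ S e).
  { apply Rmult_le_pos. left; apply Rinv_0_lt_compat, pow_lt; lra. apply pow_le; lra. }
  assert (HQ : 0 <= (/4) ^ S e) by (apply pow_le; lra).
  replace (S0 ^ e * (/ 4) ^ e * / sn ^ e * (3 * S0 / 4)) with (3 * (/4)^(S e) * (/ sn ^ e * S0 ^ S e)) in HLB
    by (simpl pow; field; apply pow_nonzero; lra).
  apply Rle_ge.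
  replace ((sqrt (2 * PI) / exp 2) ^ S e * Kfun a (S e) l * / sn ^ e * S0 ^ S e) with
    (((sqrt (2 * PI) / exp 2) ^ S e * Kfun a (S e) l) * (/ sn ^ e * S0 ^ S e)) by ring.
  assert (X := Rmult_le_compat_r _ _ _ HZ HK). nra.
Qed.
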